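(* If $(a_k)_{k\in\mathbb Z}\in l^1(\mathbb Z)$ satisfies $a_k=\frac12a_{3k-2}+a_{3k}+\frac12a_{3k+2}$ for all $k\in\mathbb Z$, then $a_k=0$ for all $k\neq0$. *)

(* Defs.v *)
From Stdlib Require Import Reals ZArith.
Open Scope R_scope.

Definition abs_partial_sum (a : Z -> R) (N : nat) : R :=
  sum_f_R0 (fun i => Rabs (a (Z.of_nat i - Z.of_nat N)%Z)) (2 * N).

Definition in_l1Z (a : Z -> R) : Prop :=
  exists M : R, forall N : nat, abs_partial_sum a N <= M.

(* Main.v *)
Require Import Defs.
From Stdlib Require Import Reals ZArith.
From Stdlib Require Import List Lia Lra.
Open Scope R_scope.

Fixpoint lsum {A : Type} (g : A -> R) (l : list A) : R :=
  match l with nil => 0 | x :: t => g x + lsum g t end.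

Lemma lsum_app {A} (g : A -> R) l1 l2 : lsum g (l1 ++ l2) = lsum g l1 + lsum g l2.
Proof. induction l1; simpl; [ring | rewrite IHl1; ring]. Qed.

Lemma lsum_map {A B} (g : B -> R) (f : A -> B) l :
  lsum g (map f l) = lsum (fun x => g (f x)) l.
Proof. induction l; simpl; [ring | rewrite IHl; ring]. Qed.

Lemma lsum_plus {A} (f g : A -> R) l : lsum (fun x => f x + g x) l = lsum f l + lsum g l.
Proof. induction l; simpl; [ring | rewrite IHl; ring]. Qed.

Lemma lsum_scal {A} (c : R) (f : A -> R) l : lsum (fun x => c * f x) l = c * lsum f l.
Proof. induction l; simpl; [ring | rewrite IHl; ring]. Qed.

Lemma lsum_const {A} (c : R) (l : list A) : lsum (fun _ => c) l = INR (length l) * c.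
Proof. induction l; simpl length; [simpl; ring | simpl lsum; rewrite IHl, S_INR; ring]. Qed.

Lemma lsum_le {A} (f g : A -> R) l : (forall x, f x <= g x) -> lsum f l <= lsum g l.
Proof. intros H; induction l; simpl; [lra | specialize (H a); lra]. Qed.

Lemma lsum_nonneg {A} (f : A -> R) l : (forall x, 0 <= f x) -> 0 <= lsum f l.
Proof. intros H; induction l; simpl; [lra | specialize (H a); lra]. Qed.

Lemma lsum_In {A} (f : A -> R) l x : (forall x, 0 <= f x) -> In x l -> f x <= lsum f l.
Proof.
  intros H; induction l as [|y t IH]; simpl; [tauto|].
  intros [<-|Hi].
  - pose proof (lsum_nonneg f t H); lra.
  - pose proof (H y); specialize (IH Hi); lra.
Qed.

Lemma lsum_incl {A} (g : A -> R) (l : list A) : forall l',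
  (forall x, 0 <= g x) -> NoDup l -> incl l l' -> lsum g l <= lsum g l'.
Proof.
  induction l as [|x t IH]; intros l' Hg Hnd Hinc; simpl.
  - apply lsum_nonneg; auto.
  - inversion Hnd as [|? ? Hx Ht]; subst.
    assert (Hxl : In x l') by (apply Hinc; simpl; auto).
    destruct (in_split x l' Hxl) as [l1 [l2 ->]].
    rewrite lsum_app; simpl.
    assert (lsum g t <= lsum g (l1 ++ l2)).
    { apply IH; auto. intros y Hy.
      assert (Hy' : In y (l1 ++ x :: l2)) by (apply Hinc; simpl; auto).
      apply in_app_or in Hy'. apply in_or_app.
      destruct Hy' as [H1|[H1|H1]]; auto. subst; contradiction. }
    rewrite lsum_app in H. lra.
Qed.

Lemma NoDup_map_inj {A B} (f : A -> B) l :
  (forall x y, f x = f y -> x = y) -> NoDup l -> NoDup (map f l).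
Proof.
  intros Hf; induction 1; simpl; constructor; auto.
  intros Hi. apply in_map_iff in Hi. destruct Hi as [y [Hy Hy']].
  apply Hf in Hy; subst; contradiction.
Qed.

Definition Win (M : nat) : list Z :=
  map (fun i => (Z.of_nat i - Z.of_nat M)%Z) (seq 0 (2 * M + 1)).

Lemma Win_In M j : (- Z.of_nat M <= j <= Z.of_nat M)%Z -> In j (Win M).
Proof.
  intros H. unfold Win. apply in_map_iff. exists (Z.to_nat (j + Z.of_nat M)).
  split; [lia|]. apply in_seq. lia.
Qed.

Lemma Win_NoDup M : NoDup (Win M).
Proof. apply NoDup_map_inj; [intros; lia | apply seq_NoDup]. Qed.

Lemma sum_f_lsum (h : Z -> R) (c : Z) n :
  sum_f_R0 (fun i => h (Z.of_nat i - c)%Z) n =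
  lsum h (map (fun i => (Z.of_nat i - c)%Z) (seq 0 (S n))).
Proof.
  induction n.
  - simpl. ring.
  - rewrite seq_S, map_app, lsum_app. simpl sum_f_R0. rewrite IHn.
    simpl (lsum h (map _ (_ :: nil))). replace (0 + S n)%nat with (S n) by lia. ring.
Qed.

Lemma aps_eq a N : abs_partial_sum a N = lsum (fun j => Rabs (a j)) (Win N).
Proof.
  unfold abs_partial_sum, Win. rewrite (sum_f_lsum (fun j => Rabs (a j))). do 3 f_equal. lia.
Qed.

Lemma arch (c B : R) : 0 < c -> exists n : nat, B < INR n * c.
Proof.
  intros Hc. destruct (archimed (B / c)) as [H1 _].
  exists (Z.to_nat (up (B / c))).
  destruct (Z_lt_le_dec (up (B / c)) 0) as [Hl|Hl].
  - assert (B / c < 0). { apply IZR_lt in Hl. lra. }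
    assert (B < 0).
    { destruct (Rle_lt_dec 0 B) as [Hb|Hb]; auto.
      assert (0 <= B / c) by (unfold Rdiv; apply Rmult_le_pos; [lra | left; apply Rinv_0_lt_compat; lra]). lra. }
    pose proof (pos_INR (Z.to_nat (up (B / c)))). nra.
  - rewrite INR_IZR_INZ, Z2Nat.id by lia.
    apply Rmult_lt_reg_r with (/ c); [apply Rinv_0_lt_compat; auto|].
    rewrite Rmult_assoc, Rinv_r by lra. lra.
Qed.

Definition w (j : Z) : R := if Z.eqb (j mod 3) 0 then 2 else 1.

Lemma w_m2 k : w (3 * k - 2)%Z = 1.
Proof. unfold w. replace (3 * k - 2)%Z with (-2 + k * 3)%Z by ring.
  rewrite Z_mod_plus_full. reflexivity. Qed.
Lemma w_p2 k : w (3 * k + 2)%Z = 1.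
Proof. unfold w. replace (3 * k + 2)%Z with (2 + k * 3)%Z by ring.
  rewrite Z_mod_plus_full. reflexivity. Qed.
Lemma w_0 k : w (3 * k)%Z = 2.
Proof. unfold w. replace (3 * k)%Z with (0 + k * 3)%Z by ring.
  rewrite Z_mod_plus_full. reflexivity. Qed.
Lemma w_bounds j : 1 <= w j <= 2.
Proof. unfold w. destruct (Z.eqb _ _); lra. Qed.

Lemma lsum_ext {A} (f g : A -> R) l : (forall x, f x = g x) -> lsum f l = lsum g l.
Proof. intros H; induction l; simpl; [ring | rewrite IHl, H; ring]. Qed.

Lemma Win_In_inv M j : In j (Win M) -> (- Z.of_nat M <= j <= Z.of_nat M)%Z.
Proof.
  unfold Win. intros H. apply in_map_iff in H. destruct H as [i [<- Hi]].
  apply in_seq in Hi. lia.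
Qed.

Fixpoint Mseq (m0 : nat) (n : nat) : nat :=
  match n with O => m0 | S n => (3 * Mseq m0 n + 2)%nat end.

Theorem corollary3p6 (a : Z -> R) :
  in_l1Z a ->
  (forall k : Z,
      a k = / 2 * a (3 * k - 2)%Z + a (3 * k)%Z + / 2 * a (3 * k + 2)%Z) ->
  forall k : Z, k <> 0%Z -> a k = 0.
Proof.
  intros [B HB] Hrec.
  set (h := fun j => Rabs (a j)).
  assert (Hh : forall j, 0 <= h j) by (intros; apply Rabs_pos).
  assert (HT : forall M, lsum h (Win M) <= B) by (intros M; unfold h; rewrite <- aps_eq; auto).
  set (G := fun M => lsum (fun x => w x * h x) (Win M)).
  assert (Hwh : forall x, 0 <= w x * h x).
  { intros x; pose proof (w_bounds x); pose proof (Hh x); nra. }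
  assert (HG : forall M, G M <= 2 * B).
  { intros M. unfold G. specialize (HT M).
    apply Rle_trans with (lsum (fun x => 2 * h x) (Win M)).
    - apply lsum_le. intros x; pose proof (w_bounds x); pose proof (Hh x); nra.
    - rewrite lsum_scal. lra. }
  assert (Hpt : forall k, 2 * h k <= h (3 * k - 2)%Z + 2 * h (3 * k)%Z + h (3 * k + 2)%Z).
  { intros k. unfold h. rewrite (Hrec k).
    set (x := a (3 * k - 2)%Z). set (y := a (3 * k)%Z). set (z := a (3 * k + 2)%Z).
    pose proof (Rle_abs x). pose proof (Rle_abs y). pose proof (Rle_abs z).
    pose proof (Rle_abs (-x)). pose proof (Rle_abs (-y)). pose proof (Rle_abs (-z)).
    rewrite Rabs_Ropp in *.
    assert (Rabs (/ 2 * x + y + / 2 * z) <= /2 * Rabs x + Rabs y + /2 * Rabs z).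
    { apply Rabs_le. lra. }
    lra. }
  assert (Step1 : forall j, (j mod 3 <> 0)%Z -> a j = 0).
  { intros j Hj. destruct (Req_dec (a j) 0) as [E|E]; auto. exfalso.
    set (c := h j). assert (Hc : 0 < c) by (apply Rabs_pos_lt; auto).
    assert (Hwj : w j = 1) by (unfold w; destruct (Z.eqb_spec (j mod 3) 0); [lia|reflexivity]).
    assert (Key : forall M, (Z.abs j <= Z.of_nat M)%Z -> G M + c <= G (3 * M + 2)%nat).
    { intros M HM.
      assert (H1 : G M + c <= lsum (fun k => 2 * h k) (Win M)).
      { assert (Hs : lsum (fun k => 2 * h k) (Win M) =
                     G M + lsum (fun k => (2 - w k) * h k) (Win M)).
        { unfold G. rewrite <- lsum_plus. apply lsum_ext. intros; ring. }
        rewrite Hs.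
        assert (c <= lsum (fun k => (2 - w k) * h k) (Win M)).
        { replace c with ((2 - w j) * h j) by (rewrite Hwj; unfold c; ring).
          apply (lsum_In (fun k => (2 - w k) * h k)).
          - intros x; pose proof (w_bounds x); pose proof (Hh x); nra.
          - apply Win_In. lia. }
        lra. }
      set (W := Win M).
      set (L := (map (fun k => (3 * k - 2)%Z) W ++ map (fun k => (3 * k)%Z) W)
                  ++ map (fun k => (3 * k + 2)%Z) W).
      assert (H2 : lsum (fun k => 2 * h k) W <= lsum (fun x => w x * h x) L).
      { apply Rle_trans with
          (lsum (fun k => h (3 * k - 2)%Z + 2 * h (3 * k)%Z + h (3 * k + 2)%Z) W).
        - apply lsum_le; auto.
        - unfold L. rewrite !lsum_app, !lsum_map, !lsum_plus.
          right. f_equal; [f_equal|]; apply lsum_ext; intros x.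
          + rewrite w_m2; ring.
          + rewrite w_0; ring.
          + rewrite w_p2; ring. }
      assert (H3 : lsum (fun x => w x * h x) L <= G (3 * M + 2)%nat).
      { unfold G. apply lsum_incl; auto.
        - assert (HW := Win_NoDup M). fold W in HW. unfold L.
          apply NoDup_app; [apply NoDup_app| |].
          + apply NoDup_map_inj; auto; intros; lia.
          + apply NoDup_map_inj; auto; intros; lia.
          + intros x H5 H6. apply in_map_iff in H5, H6.
            destruct H5 as [u [Hu _]]; destruct H6 as [v [Hv _]]; lia.
          + apply NoDup_map_inj; auto; intros; lia.
          + intros x H5 H6. apply in_map_iff in H6. destruct H6 as [v [Hv _]].
            apply in_app_or in H5. destruct H5 as [H5|H5]; apply in_map_iff in H5;
            destruct H5 as [u [Hu _]]; lia.
        - intros x Hx. unfold L in Hx. apply Win_In.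
          apply in_app_or in Hx. destruct Hx as [Hx|Hx];
            [apply in_app_or in Hx; destruct Hx as [Hx|Hx]|];
            apply in_map_iff in Hx; destruct Hx as [u [<- Hu]];
            apply Win_In_inv in Hu; lia. }
      unfold W in *. lra. }
    assert (Hit : forall n, (Z.abs j <= Z.of_nat (Mseq (Z.to_nat (Z.abs j)) n))%Z /\
                            INR n * c <= G (Mseq (Z.to_nat (Z.abs j)) n)).
    { induction n as [|n [IH1 IH2]].
      - split; [simpl; lia|]. simpl. rewrite Rmult_0_l. apply lsum_nonneg; auto.
      - change (Mseq (Z.to_nat (Z.abs j)) (S n)) with (3 * Mseq (Z.to_nat (Z.abs j)) n + 2)%nat.
        split; [lia|]. pose proof (Key _ IH1).
        rewrite S_INR. lra. }
    destruct (arch c (2 * B) Hc) as [n Hn].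
    destruct (Hit n) as [_ Hn2]. specialize (HG (Mseq (Z.to_nat (Z.abs j)) n)). lra. }
  assert (H3k : forall k, a (3 * k)%Z = a k).
  { intros k. rewrite (Hrec k), (Step1 (3 * k - 2)%Z), (Step1 (3 * k + 2)%Z).
    - ring.
    - replace (3 * k + 2)%Z with (2 + k * 3)%Z by ring. rewrite Z_mod_plus_full. discriminate.
    - replace (3 * k - 2)%Z with (-2 + k * 3)%Z by ring. rewrite Z_mod_plus_full. discriminate. }
  intros k Hk. destruct (Req_dec (a k) 0) as [E|E]; auto. exfalso.
  set (c := h k). assert (Hc : 0 < c) by (apply Rabs_pos_lt; auto).
  set (p := fun i => Z.of_nat (3 ^ i)).
  assert (Hp : forall i, (0 < p i)%Z).
  { intros i. unfold p. pose proof (Nat.pow_nonzero 3 i). lia. }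
  set (f := fun i => (p i * k)%Z).
  assert (Hf : forall i, a (f i) = a k).
  { induction i.
    - unfold f, p. change (Z.of_nat (3^0)) with 1%Z. rewrite Z.mul_1_l. auto.
    - unfold f, p in *. change (3 ^ S i)%nat with (3 * 3 ^ i)%nat.
      rewrite Nat2Z.inj_mul, <- Z.mul_assoc, H3k. auto. }
  destruct (arch c B Hc) as [n Hn].
  set (l := map f (seq 0 n)).
  assert (Hl : lsum h l = INR n * c).
  { unfold l. rewrite lsum_map.
    rewrite (lsum_ext _ (fun _ => c)).
    - rewrite lsum_const, length_seq. auto.
    - intros x. unfold h, c. rewrite Hf. auto. }
  set (P := (p n * Z.abs k)%Z).
  assert (HP : (0 <= P)%Z) by (unfold P; pose proof (Hp n); nia).
  assert (Hle : lsum h l <= lsum h (Win (Z.to_nat P))).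
  { apply lsum_incl; auto.
    - apply NoDup_map_inj; [|apply seq_NoDup].
      intros x y Hxy. unfold f, p in Hxy.
      apply Z.mul_reg_r in Hxy; auto. apply Nat2Z.inj in Hxy.
      apply Nat.pow_inj_r in Hxy; auto.
    - intros x Hx. unfold l in Hx. apply in_map_iff in Hx.
      destruct Hx as [i [<- Hi]]. apply in_seq in Hi. apply Win_In.
      rewrite Z2Nat.id by auto.
      assert (Hpi : (p i <= p n)%Z).
      { unfold p. apply Nat2Z.inj_le. apply Nat.pow_le_mono_r; lia. }
      assert (Z.abs (f i) <= P)%Z.
      { unfold f, P. rewrite Z.abs_mul, (Z.abs_eq (p i)) by (pose proof (Hp i); lia).
        apply Z.mul_le_mono_nonneg_r; auto. lia. }
      lia. }
  specialize (HT (Z.to_nat P)). lra.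
Qed.
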